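(* Let $G=(V,E)$ be an $n$-node graph, $\mathcal{C}$ a clustering of $G$ produced by $\mathbf{cluster}(G,e)$ for some integer $e \ge 1$, and $d, m$ positive integers (with $d$ possibly $\infty$). Let $\mathcal{S}$ be the output of $\mathbf{createStrips}(G, \mathcal{C}, d, m)$. Then the set of edges lying on paths in $\mathcal{S}$ contains only $O(n)$ edges that are incident on a clustered node (with the constant in $O(\cdot)$ independent of $G, e, d, m$).
   Context: $G$ is unweighted and undirected. For each pair of nodes $u,v$ a shortest path $\rho_G(u,v)$ is fixed, the choice being consistent and such that any two chosen shortest paths intersect on at most one (contiguous) subpath. The procedure $\mathbf{cluster}(G,e)$: initialize $\mathcal{C} = \emptyset$, unmark all nodes; while there is an unmarked node $u$ with at least $e-1$ unmarked neighbors, let $C$ be $u$ together with any $e-1$ of its unmarked neighbors, mark all nodes of $C$, add $C$ to $\mathcal{C}$; return $\mathcal{C}$. Elements of $\mathcal{C}$ are clusters; a node is clustered if it lies in some cluster, unclustered otherwise. The procedure $\mathbf{createStrips}(G,\mathcal{C},d,m)$: initialize $\mathcal{S}=\emptyset$; while there exist $u,v \in V$ such that (1) $\delta_G(u,v) \le d$, (2) $\rho_G(u,v)$ intersects (shares a node with) at most $m$ different paths in $\mathcal{S}$, and (3) $\rho_G(u,v)$ intersects exactly $m$ clusters that share no node with any path in $\mathcal{S}$, add $\rho_G(u,v)$ to $\mathcal{S}$; return $\mathcal{S}$. The paths in $\mathcal{S}$ are called strips. *)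

(* Defs.v *)
From mathcomp Require Import all_boot.
Set Implicit Arguments. Unset Strict Implicit. Unset Printing Implicit Defensive.

Section Defs.
Variable T : finType.
Variable adj : rel T.

Definition simple_graph : Prop := symmetric adj /\ irreflexive adj.

(* a walk from u to v is  u :: p  with  path adj u p  and  last u p = v;
   its length (number of edges) is  size p *)
Definition walk (u v : T) (p : seq T) : bool := path adj u p && (last u p == v).

Definition connected_nodes (u v : T) : Prop := exists p, walk u v p.

(* delta_G(u,v) <= d, where d = None encodes d = infinity
   (then the condition only requires delta_G(u,v) < infinity) *)
Definition dist_le (u v : T) (d : option nat) : Prop :=
  match d with
  | Some k => exists p, walk u v p /\ size p <= k
  | None => connected_nodes u v
  end.

Definition shortest_paths_choice (rho : T -> T -> seq T) : Prop :=
  forall u v, connected_nodes u v ->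
    exists p, rho u v = u :: p /\ walk u v p /\
      forall q, walk u v q -> size p <= size q.

Definition consistent_choice (rho : T -> T -> seq T) : Prop :=
  forall u v, connected_nodes u v ->
    forall i j, i <= j -> j < size (rho u v) ->
      rho (nth u (rho u v) i) (nth u (rho u v) j) = drop i (take j.+1 (rho u v)).

(* any two chosen paths intersect on at most one contiguous subpath *)
Definition single_intersection (rho : T -> T -> seq T) : Prop :=
  forall u v u' v', connected_nodes u v -> connected_nodes u' v' ->
    infix [seq x <- rho u v | x \in rho u' v'] (rho u v).

Definition marked_by (Cs : seq {set T}) : {set T} := \bigcup_(C <- Cs) C.

(* one iteration of the while loop, given the current set of marked nodes *)
Definition cluster_step (e : nat) (marked : {set T}) (C : {set T}) : Prop :=
  exists u, [/\ u \in C, u \notin marked,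
    C :\ u \subset [set w | adj u w & w \notin marked] & #|C :\ u| = e.-1].

(* loop guard is false *)
Definition cluster_final (e : nat) (marked : {set T}) : Prop :=
  forall u, u \notin marked -> #|[set w | adj u w & w \notin marked]| < e.-1.

(* Cs (in order of creation) is a possible output of cluster(G, e) *)
Definition cluster_output (e : nat) (Cs : seq {set T}) : Prop :=
  (forall i, i < size Cs -> cluster_step e (marked_by (take i Cs)) (nth set0 Cs i))
  /\ cluster_final e (marked_by Cs).

Definition meets (p q : seq T) : bool := has (fun x => x \in q) p.
Definition meets_set (C : {set T}) (p : seq T) : bool := has (fun x => x \in C) p.

(* the loop condition (1)-(3) for the pair (u, v), given current strips S *)
Definition strip_cond (rho : T -> T -> seq T) (Cs : seq {set T})
    (d : option nat) (m : nat) (S : seq (seq T)) (u v : T) : Prop :=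
  [/\ dist_le u v d,
      size (undup [seq s <- S | meets (rho u v) s]) <= m &
      count (fun C => meets_set C (rho u v) && ~~ has (meets_set C) S) Cs = m].

(* S (in order of insertion) is a possible output of createStrips(G,C,d,m) *)
Definition strips_output (rho : T -> T -> seq T) (Cs : seq {set T})
    (d : option nat) (m : nat) (S : seq (seq T)) : Prop :=
  (forall i, i < size S -> exists u v,
      strip_cond rho Cs d m (take i S) u v /\ nth [::] S i = rho u v)
  /\ (forall u v, ~ strip_cond rho Cs d m S u v).

Definition clustered (Cs : seq {set T}) (x : T) : bool := x \in marked_by Cs.

Definition strip_edges_at_clustered (Cs : seq {set T}) (S : seq (seq T)) : {set {set T}} :=
  [set [set x; y] | x in T, y in T &
     has (fun s => infix [:: x; y] s) S && (clustered Cs x || clustered Cs y)].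
End Defs.

(* Main.v *)
Require Import Defs.
From mathcomp Require Import all_boot.
From mathcomp Require Import zify.
Set Implicit Arguments. Unset Strict Implicit. Unset Printing Implicit Defensive.

Section Aux.
Variable T : finType.
Variable adj : rel T.
Hypothesis adj_sym : symmetric adj.
Hypothesis adj_irr : irreflexive adj.

Definition shortest (x : T) (p : seq T) :=
  path adj x p /\ (forall q, path adj x q -> last x q = last x p -> size p <= size q).

Lemma sp_uniq x p : shortest x p -> uniq (x :: p).
Proof.
case=> Hp Hmin.
have Hsp: shorten_spec adj x p (last x p) (shorten x p) by apply: shortenP.
move Ey: (last x p) Hsp => y Hsp; move: (shorten x p) Hsp => p0 Hsp.
case: Hsp Ey => p' Hp' Hu Hsub Ey.
apply: (leq_size_uniq Hu).
- move=> z; rewrite !inE => /orP[->//|/Hsub ->]; by rewrite orbT.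
- by rewrite /= ltnS; apply: Hmin.
Qed.

Lemma sp_nogap x p a y b z c : shortest x p -> x :: p = a ++ y :: b ++ z :: c ->
  adj y z -> b = [::].
Proof.
case=> Hp Hmin Heq Hyz; case: b Heq => [//|b0 b] Heq; exfalso.
case: a Heq => [|x' a] /= [Hx Hpe]; subst.
- have Hc : path adj z c.
    by move: Hp; rewrite -cat_cons cat_path => /andP[_ /= /andP[_ ->]].
  have := Hmin (z :: c); rewrite /= Hyz Hc last_cat /= size_cat /=.
  move=> H; have := H erefl erefl; lia.
- move: Hp; rewrite cat_path => /andP[Ha /= /andP[Hly Hr]].
  have Hc : path adj z c.
    by move: Hr => /andP[_]; rewrite cat_path => /andP[_ /= /andP[_ ->]].
  have := Hmin (a ++ y :: z :: c).
  rewrite cat_path Ha /= Hly Hyz Hc !last_cat /= last_cat /= !size_cat /=.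
  move=> H; have := H erefl erefl; rewrite size_cat /=; lia.
Qed.

Lemma sp_adj x p y z : shortest x p -> y \in x :: p -> z \in x :: p -> adj y z ->
  infix [:: y; z] (x :: p) || infix [:: z; y] (x :: p).
Proof.
move=> Hs Hy Hz Hyz.
have Hne : (z == y) = false by apply/eqP => E; move: Hyz; rewrite E adj_irr.
have [q Eq] : exists q, q = x :: p by eexists.
rewrite -Eq in Hy Hz *.
move: Eq Hz; case/splitPr: Hy => a t Eq.
rewrite mem_cat inE Hne /= => /orP[Ha|Ht].
- move: Eq; case/splitPr: Ha => a1 a2; rewrite -catA cat_cons => Eq.
  have Hzy : adj z y by rewrite adj_sym.
  have E2 := sp_nogap Hs (esym Eq) Hzy; subst a2.
  apply/orP; right; apply/infixP; exists a1, t; by [].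
- move: Eq; case/splitPr: Ht => b c Eq.
  have E2 := sp_nogap Hs (esym Eq) Hyz; subst b.
  apply/orP; left; apply/infixP; exists a, c; by [].
Qed.

Lemma infix_tail (P : pred T) x t : uniq (x :: t) ->
  infix (filter P (x :: t)) (x :: t) -> infix (filter P t) t.
Proof.
move=> /andP[xt _]; rewrite [filter P (x :: t)]/=.
case Px: (P x); rewrite infix_consl.
- case/orP => [|H]; first by rewrite prefix_cons eqxx /=; apply: prefixW.
  by move: (mem_infix H (mem_head x _)); rewrite (negbTE xt).
- case Ef: (filter P t) => [|a f]; first by rewrite infix0s.
  case/orP => [|//]; rewrite prefix_cons => /andP[/eqP Hax _].
  have: a \in filter P t by rewrite Ef mem_head.
  by rewrite mem_filter Hax (negbTE xt) andbF.
Qed.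

Lemma infix_gap (P : pred T) x y r : uniq (x :: y :: r) ->
  infix (filter P (x :: y :: r)) (x :: y :: r) -> P x -> ~~ P y -> ~~ has P r.
Proof.
move=> Hu + Px Py; rewrite [filter P _]/= Px (negbTE Py) infix_consl.
case/orP.
- rewrite prefix_cons eqxx /=.
  rewrite has_filter; case Ef: (filter P r) => [|a f] //.
  move=> /andP[/eqP Hay _].
  have: a \in filter P r by rewrite Ef mem_head.
  by rewrite mem_filter Hay (negbTE Py).
- move=> H; move: (mem_infix H (mem_head x _)); move: Hu => /= /andP[].
  by rewrite inE => /negbTE ->.
Qed.

Fixpoint es (s : seq T) : {set {set T}} :=
  if s is x :: t then (if t is y :: _ then [set x; y] |: es t else set0) else set0.

Lemma es_infix s x y : infix [:: x; y] s -> [set x; y] \in es s.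
Proof.
elim: s => [//|a t IH]; rewrite infix_consl => /orP[|/IH].
- case: t {IH} => [|b t] /=; first by rewrite andbF.
  by move=> /and3P[/eqP-> /eqP-> _]; rewrite setU11.
- by case: t {IH} => [|b t] H; [rewrite inE in H | rewrite /= setU1r].
Qed.

Lemma card_single_D (a : {set T}) (E : {set {set T}}) :
  #|[set a] :\: E| = (a \notin E).
Proof.
have -> : [set a] :\: E = if a \in E then set0 else [set a].
  apply/setP => z; rewrite !inE; case: (eqVneq z a) => [->|Hza]; case: (a \in E); rewrite ?inE ?eqxx ?andbF ?(negbTE Hza) //.
by case: (a \in E); rewrite ?cards0 ?cards1.
Qed.

Lemma es_step (E : {set {set T}}) x y t :
  #|es (x :: y :: t) :\: E| <= ([set x; y] \notin E) + #|es (y :: t) :\: E|.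
Proof.
rewrite [es (x :: _)]/= setDUl -card_single_D.
exact: leq_card_setU.
Qed.

Lemma met_le (l : seq (seq T)) (P Q : pred (seq T)) : (forall a, P a -> Q a) ->
  size (undup (filter P l)) <= size (undup (filter Q l)).
Proof.
move=> H; apply: uniq_leq_size; first exact: undup_uniq.
by move=> a; rewrite !mem_undup !mem_filter => /andP[/H -> ->].
Qed.

Lemma met_lt (l : seq (seq T)) (P Q : pred (seq T)) a : (forall a, P a -> Q a) ->
  a \in l -> Q a -> ~~ P a ->
  size (undup (filter P l)) < size (undup (filter Q l)).
Proof.
move=> H al Qa Pa.
have: size (a :: undup (filter P l)) <= size (undup (filter Q l)); last by [].
apply: uniq_leq_size.
  by rewrite /= undup_uniq mem_undup mem_filter (negbTE Pa).
move=> b; rewrite inE !mem_undup !mem_filter => /orP[/eqP->|/andP[/H -> ->]] //.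
by rewrite Qa al.
Qed.

Lemma cov_card (O : {set T}) s : uniq s ->
  #|O :|: [set z | z \in s]| = #|O| + count (fun z => z \notin O) s.
Proof.
elim: s => [_|x t IH /andP[xt Ut]].
  have -> : [set z | z \in [::]] = set0 :> {set T} by apply/setP => z; rewrite !inE.
  by rewrite setU0 addn0.
have -> : O :|: [set z | z \in x :: t] = x |: (O :|: [set z | z \in t]).
  by apply/setP => z; rewrite !inE orbCA.
rewrite cardsU1 IH // !inE (negbTE xt) orbF /=.
by rewrite addnCA.
Qed.

Lemma cardUD_le (A B : {set {set T}}) : #|A :|: B| <= #|A| + #|B :\: A|.
Proof.
have -> : A :|: B = A :|: (B :\: A).
  by apply/setP => z; rewrite !inE; case: (z \in A); case: (z \in B).
exact: leq_card_setU.
Qed.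

Section Main.
Variable E : {set {set T}}.
Variable St : seq (seq T).
Let O := [set z | has (fun s' => z \in s') St].
Hypothesis HE : forall s', s' \in St -> forall y z, y \in s' -> z \in s' -> adj y z ->
  [set y; z] \in E.
Let met (s : seq T) := size (undup [seq s' <- St | meets s s']).

Lemma main_new x r : path adj x r -> uniq (x :: r) ->
  (forall s', s' \in St -> infix [seq z <- x :: r | z \in s'] (x :: r)) ->
  #|es (x :: r) :\: E| + (x \notin O) <=
     2 * count (fun z => z \notin O) (x :: r) + met (x :: r).
Proof.
elim: r x => [|y r IH] x Hp Hu Hc.
  rewrite /= set0D cards0 addn0; by case: (x \notin O).
case/andP: (Hp) => Hxy Hp'.
have Hu' : uniq (y :: r) by case/andP: Hu.
have Hc' : forall s', s' \in St -> infix [seq z <- y :: r | z \in s'] (y :: r).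
  move=> s' Hs'; exact: (infix_tail Hu (Hc s' Hs')).
have IH' := IH y Hp' Hu' Hc'.
have Hes := es_step E x y r.
have Hmet : met (y :: r) <= met (x :: y :: r).
  apply: met_le => a; rewrite /meets /= => ->; by rewrite orbT.
have Hb : ([set x; y] \notin E) <= 1 by case: (_ \notin _).
have Hcnt : count (fun z => z \notin O) (x :: y :: r) =
  (x \notin O) + count (fun z => z \notin O) (y :: r) by [].
rewrite Hcnt.
move: IH' Hes Hmet Hb.
set A := #|es (x :: y :: r) :\: E|. set B := #|es (y :: r) :\: E|.
set C := count _ (y :: r). set M1 := met (y :: r). set M2 := met (x :: y :: r).
clearbody A B C.
move=> IH' Hes Hmet Hb.
case Hx: (x \in O); case Hy: (y \in O); rewrite Hy in IH'; rewrite /= in IH' *.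
- move: (Hx); rewrite inE => /hasP[s' Hs' xs'].
  case Hys: (y \in s').
    have Hin : [set x; y] \in E by apply: (HE Hs').
    rewrite Hin /= in Hes; clearbody M1 M2; clear -Hes IH' Hmet; lia.
  have Hgap := infix_gap Hu (Hc s' Hs') xs' (negbT Hys).
  have Hlt : M1 < M2.
    rewrite /M1 /M2 /met; apply: (met_lt (a := s')) => //.
    - move=> a; rewrite /meets /= => ->; by rewrite orbT.
    - by rewrite /meets /= xs'.
    - by rewrite /meets /= Hys /=.
  clearbody M1 M2; clear -Hes IH' Hlt Hb; lia.
- clearbody M1 M2; clear -Hes IH' Hmet Hb; lia.
- clearbody M1 M2; clear -Hes IH' Hmet Hb; lia.
- clearbody M1 M2; clear -Hes IH' Hmet Hb; lia.
Qed.
End Main.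
End Aux.
Lemma sp_path (T : finType) (adj : rel T) x p : shortest adj x p -> path adj x p.
Proof. by case. Qed.

Lemma dl_conn (T : finType) (adj : rel T) u v d : dist_le adj u v d -> connected_nodes adj u v.
Proof. by case: d => [k [p [Hw _]]|//]; exists p. Qed.

Lemma count_orU (X : Type) (P Q : pred X) (l : seq X) :
  count (fun C => P C || Q C) l = count P l + count (fun C => Q C && ~~ P C) l.
Proof. elim: l => [//|a l IH] /=; rewrite IH; case: (P a); case: (Q a) => /=; lia. Qed.

Theorem lemma1 :
  exists c : nat,
  forall (T : finType) (adj : rel T) (rho : T -> T -> seq T)
         (e : nat) (d : option nat) (m : nat)
         (Cs : seq {set T}) (S : seq (seq T)),
    simple_graph adj ->
    shortest_paths_choice adj rho ->
    consistent_choice adj rho ->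
    single_intersection adj rho ->
    1 <= e ->
    (forall k, d = Some k -> 1 <= k) ->
    1 <= m ->
    cluster_output adj e Cs ->
    strips_output adj rho Cs d m S ->
    #|strip_edges_at_clustered Cs S| <= c * #|T|.
Proof.
exists 3 => T adj rho e d m Cs S [Hsym Hirr] Hsp Hcons Hsi He Hd Hm [Hcl Hcf] [Hst Hfin].
have HCs : size Cs <= #|T|.
  suff H : forall i, i <= size Cs -> i <= #|marked_by (take i Cs)|.
    by apply: leq_trans (H _ (leqnn _)) (max_card _).
  elim=> [//|i IH] Hi.
  have [u [uC um _ _]] := Hcl i Hi.
  rewrite (take_nth set0 Hi) /marked_by -cats1 big_cat big_seq1 /=.
  apply: (@leq_trans #|u |: marked_by (take i Cs)|).
    by rewrite cardsU1 um add1n ltnS IH // ltnW.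
  apply: subset_leq_card; apply/subsetP => z; rewrite !inE.
  by case/orP => [/eqP->|->]; rewrite ?uC ?orbT.
have HS : forall s, s \in S -> exists u v, connected_nodes adj u v /\ s = rho u v.
  move=> s sS; have Hi : index s S < size S by rewrite index_mem.
  have [u [v [[Hdl _ _] Hn]]] := Hst _ Hi.
  exists u, v; split; first exact: dl_conn Hdl.
  by rewrite -Hn nth_index.
have HSh : forall u v, connected_nodes adj u v -> exists p, rho u v = u :: p /\ shortest adj u p.
  move=> u v Hc; have [p [Erho [Hw Hmin]]] := Hsp u v Hc; exists p; split => //.
  move: Hw => /andP[Hp /eqP Hl]; split => // q Hq Hlq; apply: Hmin.
  by rewrite /walk Hq Hlq Hl eqxx.
have Inv : forall i, i <= size S ->
  #|[set ed | has (fun s => ed \in es s) (take i S)]|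
     <= 2 * #|[set z | has (fun s => z \in s) (take i S)]| + m * i
  /\ count (fun C => has (meets_set C) (take i S)) Cs = m * i.
  elim=> [_|i IH Hi].
    rewrite take0 muln0 addn0; split; last by rewrite -(count_pred0 Cs); apply: eq_count.
    have -> : [set ed | has (fun s => ed \in es s) [::]] = set0 :> {set {set T}}.
      by apply/setP => z; rewrite !inE.
    by rewrite cards0.
  have [IH1 IH2] := IH (ltnW Hi).
  have [u [v [[Hdl Hmet Hcnt] Hn]]] := Hst i Hi.
  rewrite (take_nth [::] Hi) Hn.
  move: IH1 IH2 Hmet Hcnt; set St := take i S => IH1 IH2 Hmet Hcnt.
  have [p [Hrho Hsh]] := HSh u v (dl_conn Hdl).
  have Hu := sp_uniq Hsh.
  have HSt : forall s', s' \in St -> exists u' v', connected_nodes adj u' v' /\ s' = rho u' v'.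
    by move=> s' Hs'; apply: HS; apply: mem_take Hs'.
  have HE : forall s', s' \in St -> forall y z, y \in s' -> z \in s' -> adj y z ->
      [set y; z] \in [set ed | has (fun s => ed \in es s) St].
    move=> s' Hs' y z Hy Hz Hyz; rewrite inE; apply/hasP; exists s' => //.
    have [u' [v' [Hc' Es']]] := HSt s' Hs'.
    have [p' [Hrho' Hsh']] := HSh u' v' Hc'.
    rewrite Es' Hrho' in Hy Hz *.
    case/orP: (sp_adj Hsym Hirr Hsh' Hy Hz Hyz) => /es_infix //.
    by rewrite setUC.
  have Hconv : forall s', s' \in St -> infix [seq z <- u :: p | z \in s'] (u :: p).
    move=> s' Hs'; have [u' [v' [Hc' Es']]] := HSt s' Hs'.
    have := Hsi u v u' v' (dl_conn Hdl) Hc'; by rewrite -Es' Hrho.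
  have Hmain := main_new HE (sp_path Hsh) Hu Hconv.
  rewrite Hrho in Hmet Hcnt.
  have -> : [set ed | has (fun s => ed \in es s) (rcons St (rho u v))] =
      [set ed | has (fun s => ed \in es s) St] :|: es (u :: p).
    by apply/setP => z; rewrite !inE has_rcons Hrho orbC.
  have -> : [set z | has (fun s => z \in s) (rcons St (rho u v))] =
      [set z | has (fun s => z \in s) St] :|: [set z | z \in u :: p].
    by apply/setP => z; rewrite !inE has_rcons Hrho orbC.
  rewrite cov_card //.
  have -> : count (fun C => has (meets_set C) (rcons St (rho u v))) Cs =
      count (fun C => has (meets_set C) St) Cs +
      count (fun C => meets_set C (rho u v) && ~~ has (meets_set C) St) Cs.
    rewrite -count_orU; apply: eq_count => C; by rewrite has_rcons orbC.
  rewrite IH2 Hrho Hcnt; split; last by rewrite mulnS addnC.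
  apply: leq_trans (cardUD_le _ _) _.
  move: Hmain Hmet IH1.
  set a := #|_ :\: _|. set b := (u \notin _). set c := count _ _.
  set f := size _. set g := #|[set ed | _]|. set h := #|[set z | _]|.
  clearbody a b c f g h => Hmain Hmet IH1.
  rewrite mulnS; lia.
have [H1 H2] := Inv (size S) (leqnn _); rewrite take_size in H1 H2.
have Hsub : #|strip_edges_at_clustered Cs S| <= #|[set ed | has (fun s => ed \in es s) S]|.
  rewrite /strip_edges_at_clustered; apply: subset_leq_card; apply/subsetP => ed /imset2P[x y _ Hy ->].
  move: Hy; rewrite inE => /and3P[_ Hh _]; rewrite inE.
  move: Hh; apply: sub_has => s; exact: es_infix.
have Hcov : #|[set z | has (fun s => z \in s) S]| <= #|T| by apply: max_card.
have HmS : m * size S <= #|T| by rewrite -H2; apply: leq_trans (count_size _ _) HCs.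
move: Hsub H1 Hcov HmS.
set a := #|strip_edges_at_clustered _ _|. set b := #|[set ed | _]|. set c := #|[set z | _]|.
clearbody a b c; move=> *; lia.
Qed.
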